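(* Let $v\geq 7$ and let $C_v$ be the configuration on $\mathbb{Z}_v$ with blocks $\{m,m+1,m+3\}$, $m\in\mathbb{Z}_v$. Then its strong chromatic number is \[\chi_s(C_v)=\begin{cases}7&\text{if } v=7,\\ 6&\text{if } v=11,\\ 5&\text{if } v\equiv 1,2,3\pmod 4,\ v\notin\{7,11\},\\ 4&\text{if } v\equiv 0\pmod 4.\end{cases}\]
   Context: A strong colouring of a configuration is an assignment of colours to points such that the three points of every block receive three distinct colours; the strong chromatic number $\chi_s$ is the minimum number of colours in a strong colouring. *)

(* Defs.v *)
From mathcomp Require Import all_boot.
Set Implicit Arguments. Unset Strict Implicit. Unset Printing Implicit Defensive.

Definition zv_add (v : nat) (m : 'I_v) (a : nat) : 'I_v :=
  match v as n return 'I_n -> 'I_n with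
  | 0 => fun m => m
  | n.+1 => fun m => inord ((m + a) %% n.+1)
  end m.

Definition block (v : nat) (m : 'I_v) : seq 'I_v :=
  [:: m; zv_add m 1; zv_add m 3].

Definition strong_colouring (v k : nat) (c : 'I_v -> 'I_k) : Prop :=
  forall m : 'I_v, uniq (map c (block m)).

Definition strong_colourable (v k : nat) : Prop :=
  exists c : 'I_v -> 'I_k, strong_colouring c.

Definition strong_chromatic_number (v k : nat) : Prop :=
  strong_colourable v k /\ forall j, strong_colourable v j -> k <= j.

(* Main.v *)
Require Import Defs.
From mathcomp Require Import all_boot.
From mathcomp Require Import zify.

Set Implicit Arguments. Unset Strict Implicit. Unset Printing Implicit Defensive.

Lemma modcase n p d : p < n.+1 -> d < n.+1 ->
  ((p + d) %% n.+1 = p + d /\ p + d < n.+1) \/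
  ((p + d) %% n.+1 = p + d - n.+1 /\ n.+1 <= p + d).
Proof.
move=> hp hd; case: (ltnP (p + d) n.+1) => h.
  by left; rewrite modn_small.
right; split=> //.
rewrite -{1}(subnK h) modnDr modn_small //; lia.
Qed.

Lemma val_zv n (m : 'I_n.+1) a : nat_of_ord (zv_add m a) = (m + a) %% n.+1.
Proof. by rewrite /zv_add /= inordK // ltn_pmod. Qed.

Section S.
Variables (n k : nat) (c : 'I_n.+1 -> 'I_k).

Lemma near_ok : 3 < n ->
  (forall x y : 'I_n.+1, x < y -> c x = c y -> 4 <= y - x /\ 4 <= x + n.+1 - y) ->
  forall (p q : 'I_n.+1) d, 0 < d < 4 -> nat_of_ord q = (p + d) %% n.+1 -> c p != c q.
Proof.
move=> hn H p q d /andP[d0 d4] hq; apply/eqP=> E.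
have hp := ltn_ord p; have hq' := ltn_ord q.
have hd : d < n.+1 by lia.
have [[h1 h2]|[h1 h2]] := modcase hp hd; rewrite h1 in hq.
all: case: (ltngtP p q) => h.
all: try (have := H _ _ h E; lia).
all: try (have := H _ _ h (esym E); lia).
all: lia.
Qed.

Lemma colouring_ok : 3 < n ->
  (forall x y : 'I_n.+1, x < y -> c x = c y -> 4 <= y - x /\ 4 <= x + n.+1 - y) ->
  strong_colouring c.
Proof.
move=> hn H m; have N := near_ok hn H.
have h1 : c m != c (zv_add m 1) by apply: (N _ _ 1) => //; rewrite val_zv.
have h3 : c m != c (zv_add m 3) by apply: (N _ _ 3) => //; rewrite val_zv.
have h13 : c (zv_add m 1) != c (zv_add m 3).
  by apply: (N _ _ 2) => //; rewrite !val_zv modnDml -addnA.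
by rewrite /block /= !inE !negb_or h1 h3 h13.
Qed.

Hypothesis S : strong_colouring c.
Hypothesis hn : 3 < n.

Lemma sep (p q : 'I_n.+1) d : 0 < d < 4 -> nat_of_ord q = (p + d) %% n.+1 -> c p != c q.
Proof.
case: d => [|[|[|[|d]]]] //= _ hq.
- have := S p; rewrite /block /= !inE !negb_or => /andP[/andP[h1 _] _].
  have -> : q = zv_add p 1 by apply: val_inj; rewrite /= val_zv.
  done.
- pose m : 'I_n.+1 := inord ((p + n) %% n.+1).
  have vm : nat_of_ord m = (p + n) %% n.+1 by rewrite inordK // ltn_pmod.
  have hp := ltn_ord p.
  have e1 : zv_add m 1 = p.
    apply: val_inj; rewrite /= val_zv vm modnDml -addnA addn1 modnDr modn_small //.
  have e3 : zv_add m 3 = q.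
    apply: val_inj; rewrite /= val_zv vm modnDml hq.
    have -> : p + n + 3 = (p + 2) + n.+1 by lia.
    by rewrite modnDr.
  have := S m; rewrite /block e1 e3 /= !inE !negb_or => /andP[_ /andP[h _]].
  exact h.
- have := S p; rewrite /block /= !inE !negb_or => /andP[/andP[_ h1] _].
  have -> : q = zv_add p 3 by apply: val_inj; rewrite /= val_zv.
  done.
Qed.

Lemma dist (x y : 'I_n.+1) : x < y -> c x = c y ->
  4 <= y - x /\ 4 <= x + n.+1 - y.
Proof.
move=> hxy E.
have hx := ltn_ord x; have hy := ltn_ord y.
case: (leqP 4 (y - x)) => h1; last first.
  have : c x != c y.
    apply: (@sep x y (y - x)); first by apply/andP; split; lia.
    have -> : x + (y - x) = nat_of_ord y by lia.
    by rewrite modn_small.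
  by rewrite E eqxx.
case: (leqP 4 (x + n.+1 - y)) => h2; first by [].
have : c y != c x.
  apply: (@sep y x (x + n.+1 - y)); first by apply/andP; split; lia.
  have -> : y + (x + n.+1 - y) = x + n.+1 by lia.
  by rewrite modnDr modn_small.
by rewrite E eqxx.
Qed.

Lemma distN a b : a < b -> b < n.+1 -> c (inord a) = c (inord b) ->
  4 <= b - a /\ 4 <= a + n.+1 - b.
Proof.
move=> hab hb E.
have va : nat_of_ord (inord a : 'I_n.+1) = a by rewrite inordK //; lia.
have vb : nat_of_ord (inord b : 'I_n.+1) = b by rewrite inordK //; lia.
have h : nat_of_ord (inord a : 'I_n.+1) < nat_of_ord (inord b : 'I_n.+1) by rewrite va vb.
by have := dist h E; rewrite va vb.
Qed.

Lemma inj_small m : m <= n.+1 -> (forall a b, a < b < m -> (b - a < 4) || (a + n.+1 - b < 4)) ->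
  m <= k.
Proof.
move=> hm hw.
pose h (i : 'I_m) : 'I_k := c (inord i).
have inj : injective h.
  move=> x y E; have hx := ltn_ord x; have hy := ltn_ord y.
  case: (ltngtP x y) => h'.
  - have := distN h' (leq_trans hy hm) E.
    have := hw x y; rewrite h' hy /= => /(_ isT); lia.
  - have := distN h' (leq_trans hx hm) (esym E).
    have := hw y x; rewrite h' hx /= => /(_ isT); lia.
  - exact: val_inj.
by have := leq_card h inj; rewrite !card_ord.
Qed.

Lemma low4 : 4 <= k.
Proof. apply: inj_small => //; [lia | move=> a b /andP[]; lia]. Qed.

Lemma low5 : n.+1 %% 4 != 0 -> 5 <= k.
Proof.
move=> h4.
have j4 := low4; case: (ltnP 4 k) => // hj; exfalso.
pose g m := nat_of_ord (c (inord (m %% n.+1))).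
have gl m : g m < 4 := leq_trans (ltn_ord _) hj.
have gd m d : 0 < d < 4 -> g m != g (m + d).
  move=> hd; rewrite /g (inj_eq val_inj).
  apply: (sep hd); rewrite !inordK ?ltn_pmod // modnDml //.
have gd2 a b : a < b < a + 4 -> g a != g b.
  move=> /andP[h1 h2]; have -> : b = a + (b - a) by lia.
  apply: gd; apply/andP; split; lia.
have per m : g (m + 4) = g m.
  have := gd2 m (m+1) ltac:(lia); have := gd2 m (m+2) ltac:(lia);
  have := gd2 m (m+3) ltac:(lia); have := gd2 (m+1) (m+2) ltac:(lia);
  have := gd2 (m+1) (m+3) ltac:(lia); have := gd2 (m+1) (m+4) ltac:(lia);
  have := gd2 (m+2) (m+3) ltac:(lia); have := gd2 (m+2) (m+4) ltac:(lia);
  have := gd2 (m+3) (m+4) ltac:(lia).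
  have := gl m; have := gl (m+1); have := gl (m+2); have := gl (m+3);
  have := gl (m+4).
  lia.
have perk q m : g (m + 4 * q) = g m.
  elim: q => [|q IH]; first by rewrite muln0 addn0.
  have -> : m + 4 * q.+1 = m + 4 * q + 4 by lia.
  by rewrite per IH.
have pv m : g (m + n.+1) = g m by rewrite /g modnDr.
have : g 0 != g (n.+1 %% 4) by apply: gd2; lia.
have -> : g 0 = g (n.+1 %% 4).
  rewrite -(perk (n.+1 %/ 4) (n.+1 %% 4)) -(pv 0) add0n.
  have -> : n.+1 %% 4 + 4 * (n.+1 %/ 4) = n.+1 by lia.
  done.
by rewrite eqxx.
Qed.

End S.

Lemma five a b n : n.+1 = 4 * a + 5 * b -> 3 < n -> strong_colourable n.+1 5.
Proof.
move=> hab hn.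
pose f x := if x < 4 * a then x %% 4 else (x - 4 * a) %% 5.
have fl x : f x < 5 by rewrite /f; case: ifP => _; [have := ltn_pmod x (isT : 0 < 4); lia | exact: ltn_pmod].
exists (fun x : 'I_n.+1 => inord (f x) : 'I_5).
apply: colouring_ok => // x y hxy.
move/(congr1 (@nat_of_ord _)); rewrite !inordK ?fl //.
have := ltn_ord y; rewrite /f; case: ifP; case: ifP; lia.
Qed.

Theorem mainTheorem16 (v : nat) (hv : 7 <= v) :
  strong_chromatic_number v
    (if v == 7 then 7
     else if v == 11 then 6
     else if v %% 4 == 0 then 4
     else 5).
Proof.
case: v hv => [//|n] hv.
have hn : 3 < n by lia.
case: eqP => [E7|N7].
  case: E7 => En; subst n; split.
    exists (fun x : 'I_7 => x); apply: colouring_ok => // x y hxy E.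
    by rewrite E ltnn in hxy.
  move=> j [c S]; apply: (inj_small S) => // a b /andP[]; lia.
case: eqP => [E11|N11].
  case: E11 => En; subst n; split.
    exists (fun x : 'I_11 => inord (x %% 6) : 'I_6); apply: colouring_ok => // x y hxy.
    move/(congr1 (@nat_of_ord _)); rewrite !inordK ?ltn_pmod // => E.
    have := ltn_ord y; lia.
  move=> j [c S].
  pose phi (x : 'I_11) : 'I_j * bool := (c x, [exists y : 'I_11, (y < x) && (c y == c x)]).
  have inj : injective phi.
    suff K : forall x1 x2 : 'I_11, x1 < x2 -> phi x1 = phi x2 -> False.
      move=> x1 x2 E; case: (ltngtP x1 x2) => h.
      - case: (K _ _ h E).
      - case: (K _ _ h (esym E)).
      - exact: val_inj.
    move=> x1 x2 h; rewrite /phi => -[E B].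
    have : [exists y : 'I_11, (y < x2) && (c y == c x2)].
      by apply/existsP; exists x1; rewrite h E eqxx.
    rewrite -B => /existsP [y /andP [hy /eqP Ey]].
    have := dist S isT h E; have := dist S isT hy Ey; have := dist S isT (ltn_trans hy h) (etrans Ey E); have := ltn_ord x2; lia.
  by have := leq_card phi inj; rewrite card_prod card_bool !card_ord; lia.
case: ifP => h4.
  move/eqP: h4 => h4; split.
    exists (fun x : 'I_n.+1 => inord (x %% 4) : 'I_4); apply: colouring_ok => // x y hxy.
    move/(congr1 (@nat_of_ord _)); rewrite !inordK ?ltn_pmod // => E.
    have := ltn_ord y; lia.
  by move=> j [c S]; apply: (low4 S).
split.
  apply: (@five ((n.+1 - 5 * (n.+1 %% 4)) %/ 4) (n.+1 %% 4)) => //; lia.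
by move=> j [c S]; apply: (low5 S hn); rewrite h4.
Qed.
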